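(* Let $S=S'\wedge C$ be a scheduling problem on $n$ elements where $C$ is a contractible clause, let $V(C)=O_1\uplus\cdots\uplus O_k$ be the decomposition into $\sim_C$ equivalence classes ordered so that $O_i>O_j$ for $i<j$, and let $r_i=|O_i|-1$. Then $$\mathcal{S}_S=\mathcal{S}_{S'}-\left(\mathcal{S}_{S'\downarrow_{(r_1,\dots,r_k)}}\right)\uparrow^{(r_1,\dots,r_k)}.$$
   Context: A scheduling problem on $n$ elements is a Boolean formula over atoms $(x_i\le x_j)$, $i,j\in[n]$, with $(x_i=x_j)=(x_i\le x_j)\wedge(x_j\le x_i)$ and $(x_i\ne x_j)=\neg(x_i=x_j)$. A solution is $f:[n]\to\mathbb{P}=\{1,2,\dots\}$ making it true with $x_i=f(i)$; $\mathcal{S}_S=\sum_f y_{f(1)}\cdots y_{f(n)}$ over solutions, in noncommuting variables $y_1,y_2,\dots$. A formula $C$ given as $C=\bigvee_{(i,j)\in I}(x_i\ne x_j)$ with $I\subseteq[n]\times[n]$ is edge-like; $V(C)$ is the set of indices $i$ with $x_i$ appearing in $C$, and $\sim_C$ is the equivalence relation on $V(C)$ generated by $i\sim j$ for $(i,j)\in I$. For disjoint sets, $A>B$ means $a>b$ for all $a\in A,b\in B$. $C$ is a contractible clause if it is edge-like, $V(C)=\{m,m+1,\dots,n\}$ for some $1\le m\le n$, and the $\sim_C$ classes can be ordered $O_1,\dots,O_k$ with $O_i>O_j$ for $i<j$. With $r=\sum_i r_i$, the contraction $S'\downarrow_{(r_1,\dots,r_k)}$ is the scheduling problem on $n-r$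 elements obtained from $S'$ by replacing each variable $x_j$ by $x_{\psi(j)}$, where $\psi(j)=j$ for $j<m$ and $\psi(j)=m+k-i$ for $j\in O_i$. Induction: for nonnegative integers $r_1,\dots,r_k$ and a monomial $y_{i_1}\cdots y_{i_p}$ with $k\le p$, $y_{i_1}\cdots y_{i_p}\uparrow^{(r_1,\dots,r_k)}=y_{i_1}\cdots y_{i_{p-k}}y_{i_{p-k+1}}^{1+r_k}\cdots y_{i_p}^{1+r_1}$, extended linearly (termwise). *)

(* Defs.v *)
From mathcomp Require Import all_boot all_order all_algebra.
From Stdlib Require Import Relation_Operators.
Set Implicit Arguments. Unset Strict Implicit. Unset Printing Implicit Defensive.
Import GRing.Theory.

(* Boolean formulas over atoms (x_i <= x_j); indices are 1-based naturals. *)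
Inductive formula : Type :=
  | FBot : formula
  | FAtom : nat -> nat -> formula
  | FNeg : formula -> formula
  | FAnd : formula -> formula -> formula
  | FOr  : formula -> formula -> formula.

Fixpoint feval (x : nat -> nat) (F : formula) : bool :=
  match F with
  | FBot => false
  | FAtom i j => x i <= x j
  | FNeg G => ~~ feval x G
  | FAnd G H => feval x G && feval x H
  | FOr G H => feval x G || feval x H
  end.

Fixpoint on_elems (n : nat) (F : formula) : bool :=
  match F with
  | FBot => true
  | FAtom i j => (0 < i <= n) && (0 < j <= n)
  | FNeg G => on_elems n G
  | FAnd G H => on_elems n G && on_elems n H
  | FOr G H => on_elems n G && on_elems n H
  end.

Fixpoint frename (psi : nat -> nat) (F : formula) : formula :=
  match F with
  | FBot => FBot
  | FAtom i j => FAtom (psi i) (psi j)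
  | FNeg G => FNeg (frename psi G)
  | FAnd G H => FAnd (frename psi G) (frename psi H)
  | FOr G H => FOr (frename psi G) (frename psi H)
  end.

Definition Feq i j := FAnd (FAtom i j) (FAtom j i).
Definition Fneq i j := FNeg (Feq i j).

Definition edge_clause (I : seq (nat * nat)) : formula :=
  foldr (fun e acc => FOr (Fneq e.1 e.2) acc) FBot I.

Definition VC (I : seq (nat * nat)) : seq nat :=
  undup (flatten [seq [:: e.1; e.2] | e <- I]).

Definition simC (I : seq (nat * nat)) (i j : nat) : Prop :=
  i \in VC I /\ j \in VC I /\
  clos_refl_sym_trans nat (fun a b => (a, b) \in I) i j.

Definition ordered_class_decomp (I : seq (nat * nat)) (Os : seq (seq nat)) : Prop :=
  (forall O, O \in Os -> uniq O /\ exists x, x \in O /\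
      forall y, y \in O <-> simC I x y) /\
  (forall v, v \in VC I -> exists2 O, O \in Os & v \in O) /\
  (forall O, O \in Os -> forall v, v \in O -> v \in VC I) /\
  (forall a b, a < b < size Os ->
     forall x y, x \in nth [::] Os a -> y \in nth [::] Os b -> y < x).

(* C contractible: V(C) = {m,...,n}, 1 <= m <= n *)
Definition VC_interval (I : seq (nat * nat)) (m n : nat) : Prop :=
  0 < m <= n /\ forall i, i \in VC I = (m <= i <= n).

(* psi(j) = j for j < m, psi(j) = m + k - i for j in O_i (1-based i) *)
Definition psi (m : nat) (Os : seq (seq nat)) (j : nat) : nat :=
  if j < m then j else m + size Os - (find (fun O => j \in O) Os).+1.

Definition contraction (S' : formula) (m : nat) (Os : seq (seq nat)) : formula :=
  frename (psi m Os) S'.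

(* Formal series in noncommuting variables y_1, y_2, ... with integer
   coefficients: a word y_{a_1}...y_{a_p} is the sequence [:: a_1; ...; a_p]. *)
Definition series := seq nat -> int.

(* S_S : coefficient of the word u is the number of solutions f with
   (f 1, ..., f n) = u, i.e. 1 if u has length n, positive letters and
   x_i := u_i satisfies S, and 0 otherwise. *)
Definition Sgen (n : nat) (S : formula) : series :=
  fun u => let b : bool := (size u == n) && all (fun a => 0 < a) u
                          && feval (fun i => nth 0 u i.-1) S in
            ((b : nat)%:R)%R.

Definition up_word (rs : seq nat) (w : seq nat) : seq nat :=
  let p := size w in let k := size rs in
  take (p - k) w ++
  flatten [seq nseq x.2.+1 x.1 | x <- zip (drop (p - k) w) (rev rs)].

Fixpoint all_words (s : seq nat) (p : nat) : seq (seq nat) :=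
  match p with
  | 0 => [:: [::]]
  | p'.+1 => [seq a :: w | a <- s, w <- all_words s p']
  end.

(* every w with up_word rs w = u has length <= size u and letters in u *)
Definition candidates (u : seq nat) : seq (seq nat) :=
  flatten [seq all_words (undup u) p | p <- iota 0 (size u).+1].

(* linear (termwise) extension of induction to series (all of whose
   monomials have length >= k) *)
Definition induce (rs : seq nat) (F : series) : series :=
  fun u => (\sum_(w <- candidates u | ((size rs <= size w)%N && (up_word rs w == u)))
              F w)%R.

Definition rvec (Os : seq (seq nat)) : seq nat := map (fun O => (size O).-1) Os.

(* Main.v *)
Require Import Defs.
From mathcomp Require Import all_boot all_order all_algebra zify.
From Stdlib Require Import Relation_Operators.

Lemma up_word_nil w : up_word [::] w = w.
Proof. by rewrite /up_word subn0 take_size drop_size /= cats0. Qed.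

Lemma up_word_rcons r rs w a : size rs <= size w ->
  up_word (r :: rs) (rcons w a) = up_word rs w ++ nseq r.+1 a.
Proof.
move=> H; rewrite /up_word size_rcons /= subSS.
have -> : take (size w - size rs) (rcons w a) = take (size w - size rs) w.
  by rewrite -cats1 takel_cat // leq_subr.
have -> : drop (size w - size rs) (rcons w a) = rcons (drop (size w - size rs) w) a.
  rewrite -!cats1 drop_cat; case: ltnP => h //.
  have -> : size w - size rs = size w by apply/eqP; rewrite eqn_leq leq_subr h.
  by rewrite drop_size subnn.
rewrite rev_cons zip_rcons ?size_drop ?size_rev; last by lia.
by rewrite map_rcons flatten_rcons catA.
Qed.

Lemma feval_rename x f F : feval x (frename f F) = feval (x \o f) F.
Proof. by elim: F => //= [G -> | G -> H -> | G -> H ->]. Qed.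

Lemma feval_on n F x y : on_elems n F -> (forall j, 0 < j <= n -> x j = y j) ->
  feval x F = feval y F.
Proof.
move=> + E; elim: F => //= [i j /andP[/E -> /E ->] // | G IH /IH -> //
  | G IG H IH /andP[/IG -> /IH ->] // | G IG H IH /andP[/IG -> /IH ->] //].
Qed.

Lemma feval_edge x I : feval x (edge_clause I) = has (fun e => x e.1 != x e.2) I.
Proof.
elim: I => //= e I ->; congr (_ || _).
by rewrite /Fneq /Feq /= -eqn_leq.
Qed.

Definition cls_ok m N (Os : seq (seq nat)) :=
 (forall O, O \in Os -> uniq O /\ O != [::]) /\
 (forall j, has (fun O => j \in O) Os = (m <= j < m + N)) /\
 (forall a b, a < b < size Os -> forall x y,
     x \in nth [::] Os a -> y \in nth [::] Os b -> y < x).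

Lemma psi_range m N Os j : 0 < m -> cls_ok m N Os -> 0 < j < m + N ->
  0 < psi m Os j <= m - 1 + size Os.
Proof.
move=> m0 [_ [H _]] /andP[j0 jN]; rewrite /psi; case: (ltnP j m) => h; first lia.
set f := find _ _.
have : f < size Os by rewrite /f -has_find H h jN.
lia.
Qed.

Lemma psi_cons m O Os j : j \notin O -> psi m (O :: Os) j = psi m Os j.
Proof. by move=> h; rewrite /psi /= (negbTE h) /=; case: ifP => //; lia. Qed.

Lemma psi_cons_in m O Os j : m <= j -> j \in O -> psi m (O :: Os) j = m + size Os.
Proof. by move=> h1 h2; rewrite /psi /= h2 ltnNge h1 /=; lia. Qed.

Lemma seq_min (s : seq nat) : s != [::] -> exists2 t, t \in s & forall x, x \in s -> t <= x.
Proof.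
elim: s => // a [|b s] IH _.
  by exists a => [|x]; rewrite ?mem_seq1 // => /eqP ->.
case: IH => // t ht Ht.
case: (leqP a t) => h.
  exists a; first exact: mem_head.
  move=> x; rewrite inE => /orP[/eqP -> // | /Ht]; exact: leq_trans.
exists t; first by rewrite inE ht orbT.
move=> x; rewrite inE => /orP[/eqP -> | /Ht //]; exact: ltnW.
Qed.

Lemma cls_cons m N O Os : cls_ok m N (O :: Os) -> exists t,
  [/\ m <= t < m + N, (forall j, (j \in O) = (t <= j < m + N)),
      size O = m + N - t & cls_ok m (t - m) Os].
Proof.
move=> [HU [HH HO]].
have [uO nO] := HU O (mem_head _ _).
have [t tO tmin] := @seq_min O nO.
have inN j : j \in O -> m <= j < m + N by move=> jO; rewrite -HH /= jO.
have ltt j : has (fun O => j \in O) Os -> j < t.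
  move/hasP=> [O' O'in jO']; have := O'in; rewrite -index_mem => ib.
  apply: (HO 0 (index O' Os).+1 _ t j) => //=.
  by rewrite nth_index.
have Oiff j : (j \in O) = (t <= j < m + N).
  apply/idP/idP => [jO | /andP[tj jN]].
    by rewrite tmin //; case/andP: (inN j jO).
  have : has (fun O => j \in O) (O :: Os) by rewrite HH jN (leq_trans _ tj) //; case/andP: (inN t tO).
  rewrite /= => /orP[// | /ltt]; lia.
have tN := inN t tO.
exists t; split => //.
- have : perm_eq O (iota t (m + N - t)).
    apply: uniq_perm => //; first exact: iota_uniq.
    move=> j; rewrite Oiff mem_iota; lia.
  by move/perm_size; rewrite size_iota.
- split; [|split].
  + by move=> O' h; apply: HU; rewrite inE h orbT.
  + move=> j; apply/idP/idP => [h | h].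
      have := ltt _ h; have : has (fun O => j \in O) (O :: Os) by rewrite /= h orbT.
      rewrite HH; lia.
    have : has (fun O => j \in O) (O :: Os) by rewrite HH; lia.
    rewrite /= Oiff; case/orP => //; lia.
  + move=> a b ab x y hx hy; apply: (HO a.+1 b.+1) => //=.
Qed.

Lemma key m N Os : 0 < m -> cls_ok m N Os ->
  sumn (map size Os) = N /\
  forall w, size w = m - 1 + size Os ->
    up_word (rvec Os) w = [seq nth 0 w (psi m Os j).-1 | j <- iota 1 (m - 1 + N)].
Proof.
move=> m0; elim: Os N => [|O Os IH] N.
  move=> [_ [H _]].
  have N0 : N = 0.
    by move: (H m) => /=; clear H; case: N => // N; rewrite leqnn /= addnS ltnS leq_addr.
  subst N; split => // w; rewrite addn0 => sw.
  rewrite up_word_nil.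
  rewrite -[in LHS](mkseq_nth 0 w) /mkseq -sw -[1]/(1 + 0) iotaDl -map_comp.
  apply/eq_in_map => j; rewrite mem_iota /= /psi => h.
  by rewrite ifT //; lia.
move=> ok; have [t [tN Oiff sO ok']] := @cls_cons _ _ _ _ ok.
have [IHs IHw] := IH _ ok'.
have [uO nO] := ok.1 O (mem_head _ _).
have sO0 : 0 < size O by case: O nO {Oiff sO uO ok IH} => //.
split; first by rewrite /= IHs; lia.
move=> w; case/lastP: w => [|w a]; first by rewrite /=; lia.
rewrite size_rcons /= addnS => /eqP; rewrite eqSS => /eqP sw.
rewrite /rvec /= up_word_rcons; last by rewrite size_map sw leq_addl.
rewrite -/(rvec Os) IHw //.
have -> : m - 1 + N = (m - 1 + (t - m)) + size O by lia.
rewrite (iotaD 1 (m - 1 + (t - m))) map_cat; congr (_ ++ _).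
  apply/eq_in_map => j; rewrite mem_iota => hj.
  rewrite psi_cons; last by rewrite Oiff; lia.
  have := @psi_range _ _ _ j m0 ok' (_ : 0 < j < m + (t - m)); rewrite nth_rcons sw => h.
  by rewrite ifT //; have := h ltac:(lia); lia.
rewrite prednK //.
have -> : [seq nth 0 (rcons w a) (psi m (O :: Os) j).-1 | j <- iota (1 + (m - 1 + (t - m))) (size O)]
   = [seq a | j <- iota (1 + (m - 1 + (t - m))) (size O)].
  apply/eq_in_map => j; rewrite mem_iota => hj.
  rewrite psi_cons_in; [|lia|rewrite Oiff; lia].
  have -> : (m + size Os).-1 = size w by rewrite sw -subn1; lia.
  by rewrite nth_rcons ltnn eqxx.
have mc (s : seq nat) : map (fun _ => a) s = nseq (size s) a by elim: s => //= ? ? ->.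
by rewrite mc size_iota.
Qed.

Lemma mem_all_words (s : seq nat) p w :
  (w \in all_words s p) = (size w == p) && all (mem s) w.
Proof.
elim: p w => [|p IH] [|a w] //=.
- by apply/allpairsP => [[[x y] [_ _]]].
- rewrite eqSS; apply/allpairsP/idP => [[[x y] /= [xs yw [-> ->]]] | /andP[/eqP sw /andP[hA aw]]].
    by move: yw; rewrite IH => /andP[/eqP -> ->]; rewrite eqxx xs.
  by exists (a, w); rewrite /= hA IH sw eqxx aw.
Qed.

Lemma uniq_all_words (s : seq nat) p : uniq s -> uniq (all_words s p).
Proof.
move=> us; elim: p => [|p IH] //=.
by apply: allpairs_uniq => // [[x y] [x' y']] _ _ /= [-> ->].
Qed.

Lemma uniq_flatten_map (T : eqType) (f : nat -> seq T) (s : seq nat) :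
  (forall i, uniq (f i)) -> (forall i j x, x \in f i -> x \in f j -> i = j) ->
  uniq s -> uniq (flatten (map f s)).
Proof.
move=> uf dj; elim: s => //= a s IH /andP[hA us].
rewrite cat_uniq uf IH // andbT; apply/hasPn => x /flattenP [t /mapP [b bs ->]] xb.
apply/negP => xa; have ab := dj _ _ _ xa xb; subst b; by rewrite bs in hA.
Qed.

Lemma uniq_candidates u : uniq (candidates u).
Proof.
apply: uniq_flatten_map; last exact: iota_uniq.
  by move=> i; apply: uniq_all_words; apply: undup_uniq.
by move=> i j x; rewrite !mem_all_words => /andP[/eqP <- _] /andP[/eqP <- _].
Qed.

Lemma find_le (T : Type) (x0 : T) (P : pred T) s i : P (nth x0 s i) -> find P s <= i.
Proof. by move=> h; rewrite leqNgt; apply/negP => /(before_find x0); rewrite h. Qed.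

Lemma sumn_rvec Os : (forall O, O \in Os -> O != [::]) ->
  sumn (rvec Os) + size Os = sumn (map size Os).
Proof.
elim: Os => //= O Os IH h.
have h1 : O != [::] by apply: h; rewrite mem_head.
have h2 := IH (fun O' hO' => h O' (mem_behead (s := O :: Os) hO')).
rewrite /rvec /= -/(rvec Os); case: O h1 {h} => //= a O _; lia.
Qed.

Lemma VC_mem I e : e \in I -> e.1 \in VC I /\ e.2 \in VC I.
Proof.
move=> he; rewrite /VC !mem_undup; split; apply/flattenP; exists [:: e.1; e.2];
  rewrite ?inE ?eqxx ?orbT //; apply/mapP; by exists e.
Qed.

Theorem theorem3p8 (n m : nat) (S' : formula) (I : seq (nat * nat))
    (Os : seq (seq nat)) :
  on_elems n S' ->
  VC_interval I m n ->
  ordered_class_decomp I Os ->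
  let rs := rvec Os in
  forall u : seq nat,
    Sgen n (FAnd S' (edge_clause I)) u =
    (Sgen n S' u -
     induce rs (Sgen (n - sumn rs) (contraction S' m Os)) u)%R.
Proof.
move=> hon [/andP[m0 mn] hVC] [hD [hcov [hin hord]]] rs u.
set N := n - (m - 1).
have ok : cls_ok m N Os.
  split; [|split] => //.
  - move=> O /hD [uO [x [xO _]]]; split => //; by case: O xO {uO}.
  - move=> j; apply/hasP/idP => [[O hO jO] | h].
      by have := hin O hO j jO; rewrite hVC; lia.
    have : j \in VC I by rewrite hVC; lia.
    by case/hcov => O hO jO; exists O.
have nonem : forall O, O \in Os -> O != [::] by move=> O /(ok.1) [].
have [sN Hup0] := @key _ _ _ m0 ok.
have srs := @sumn_rvec _ nonem; rewrite sN in srs.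
set k := size Os in srs Hup0.
set p := m - 1 + k.
have hp : n - sumn rs = p by rewrite /p /rs; lia.
rewrite hp.
have hn : m - 1 + N = n by rewrite /N; lia.
rewrite hn in Hup0.
pose Uw (w : seq nat) := [seq nth 0 w (psi m Os j).-1 | j <- iota 1 n].
have Hup w : size w = p -> up_word rs w = Uw w by move=> h; exact: Hup0.
have prange j : 0 < j <= n -> 0 < psi m Os j <= p.
  by move=> h; apply: (@psi_range _ _ _ _ m0 ok); rewrite /N; lia.
have sizeU w : size (Uw w) = n by rewrite size_map size_iota.
have nthU w j : 0 < j <= n -> nth 0 (Uw w) j.-1 = nth 0 w (psi m Os j).-1.
  move=> h; rewrite (nth_map 0); last by rewrite size_iota; lia.
  by rewrite nth_iota; [rewrite add1n prednK //; lia | lia].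
have hasV j : m <= j <= n -> has (fun O => j \in O) Os.
  by move=> h; rewrite ok.2.1 /N; lia.
have psiV j : m <= j <= n -> psi m Os j = m + k - (find (fun O => j \in O) Os).+1.
  by move=> h; rewrite /psi ifF //; lia.
have findeq j j' : m <= j <= n -> m <= j' <= n -> psi m Os j = psi m Os j' ->
    find (fun O => j \in O) Os = find (fun O => j' \in O) Os.
  move=> h h'; rewrite (psiV _ h) (psiV _ h').
  have := hasV _ h; have := hasV _ h'; rewrite !has_find -/k; lia.
have clsI O a b : O \in Os -> (a, b) \in I -> a \in O -> b \in O.
  move=> hO hab aO; have [_ [x [xO Hx]]] := hD O hO.
  have [aV bV] := @VC_mem _ _ hab.
  have [xV [_ cxa]] := (Hx a).1 aO.
  apply/(Hx b).2; split => //; split => //.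
  by apply: rst_trans cxa _; apply: rst_step.
have clsI' O a b : O \in Os -> (a, b) \in I -> b \in O -> a \in O.
  move=> hO hab bO; have [_ [x [xO Hx]]] := hD O hO.
  have [aV bV] := @VC_mem _ _ hab.
  have [xV [_ cxb]] := (Hx b).1 bO.
  apply/(Hx a).2; split => //; split => //.
  by apply: rst_trans cxb _; apply: rst_sym; apply: rst_step.
have inV a : a \in VC I -> m <= a <= n by rewrite hVC.
have psiI a b : (a, b) \in I -> psi m Os a = psi m Os b.
  move=> hab; have [aV bV] := @VC_mem _ _ hab.
  have ha := inV _ aV; have hb := inV _ bV.
  rewrite (psiV _ ha) (psiV _ hb); congr (_ - _.+1); apply/eqP; rewrite eqn_leq.
  have fa := hasV _ ha; have fb := hasV _ hb.
  rewrite !has_find in fa fb.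
  apply/andP; split; apply: (@find_le _ [::]).
    apply: (clsI' _ a b (mem_nth _ fb) hab); exact: (nth_find [::] (hasV _ hb)).
  apply: (clsI _ a b (mem_nth _ fa) hab); exact: (nth_find [::] (hasV _ ha)).
have surj i : 0 < i <= p -> has (fun j => psi m Os j == i) (iota 1 n).
  move=> hi; case: (ltnP i m) => him.
    apply/hasP; exists i; first by rewrite mem_iota; lia.
    by rewrite /psi him.
  set f := m - 1 + k - i.
  have fk : f < k by rewrite /f /p in hi *; lia.
  have Oin : nth [::] Os f \in Os by apply: mem_nth.
  case E: (nth [::] Os f) (nonem _ Oin) => [|j O] // _.
  have jO : j \in nth [::] Os f by rewrite E mem_head.
  have jV : j \in VC I by apply: (hin _ Oin).
  have hj := inV _ jV.
  have fj : find (fun O => j \in O) Os = f.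
    apply/eqP; rewrite eqn_leq (@find_le _ [::] _ _ _ jO) /=.
    rewrite leqNgt; apply/negP => lt.
    have := nth_find [::] (hasV _ hj) => /= h1.
    by move: (hord _ f (introT andP (conj lt fk)) j j h1 jO); rewrite ltnn.
  apply/hasP; exists j; first by rewrite mem_iota; lia.
  by rewrite (psiV _ hj) fj /f; apply/eqP; rewrite /p in hi; lia.
pose rho i := nth 0 (iota 1 n) (find (fun j => psi m Os j == i) (iota 1 n)).
have rhoP i : 0 < i <= p -> 0 < rho i <= n /\ psi m Os (rho i) = i.
  move=> hi; have hs := surj _ hi; split.
    have : rho i \in iota 1 n by apply: mem_nth; rewrite -has_find.
    by rewrite mem_iota; lia.
  by apply/eqP; apply: (nth_find 0 hs).
have recover w : size w = p -> w = [seq nth 0 (Uw w) (rho i).-1 | i <- iota 1 p].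
  move=> sw; apply: (@eq_from_nth _ 0); first by rewrite size_map size_iota.
  move=> i; rewrite sw => ip.
  rewrite (nth_map 0) ?size_iota // nth_iota // add1n.
  have [hr hpr] := rhoP i.+1 ltac:(lia).
  by rewrite nthU // hpr.
have psige j : m <= j <= n -> m <= psi m Os j.
  move=> h; rewrite (psiV _ h); have := hasV _ h; rewrite has_find -/k; lia.
have CONST : ~~ feval (fun i => nth 0 u i.-1) (edge_clause I) -> forall a b,
    0 < a <= n -> 0 < b <= n -> psi m Os a = psi m Os b -> nth 0 u a.-1 = nth 0 u b.-1.
  rewrite feval_edge => /hasPn hI.
  have eqI a b : (a, b) \in I -> nth 0 u a.-1 = nth 0 u b.-1.
    by move=> h; move: (hI _ h); rewrite negbK => /eqP.
  have clos a b : clos_refl_sym_trans nat (fun a b => (a, b) \in I) a b ->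
      nth 0 u a.-1 = nth 0 u b.-1.
    by elim => [x y /eqI | x | x y _ -> | x y z _ -> _ ->].
  move=> a b ha hb hab.
  case: (ltnP a m) => am; case: (ltnP b m) => bm.
  - by rewrite /psi am bm in hab; rewrite hab.
  - have : m <= psi m Os b by apply: psige; lia.
    by rewrite -hab /psi am; lia.
  - have : m <= psi m Os a by apply: psige; lia.
    by rewrite hab /psi bm; lia.
  have ha' : m <= a <= n by lia.
  have hb' : m <= b <= n by lia.
  have fe := findeq _ _ ha' hb' hab.
  have aO := nth_find [::] (hasV _ ha'); have bO := nth_find [::] (hasV _ hb').
  rewrite fe in aO.
  have Oin : nth [::] Os (find (fun O => b \in O) Os) \in Os.
    by apply: mem_nth; rewrite -has_find; apply: hasV.
  have [_ [x [xO Hx]]] := hD _ Oin.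
  have [_ [_ cxa]] := (Hx a).1 aO.
  have [_ [_ cxb]] := (Hx b).1 bO.
  by rewrite -(clos _ _ cxa) (clos _ _ cxb).
rewrite /induce; set SUM := (\sum_(w <- _ | _) _)%R.
have -> : SUM = (((size u == n) && all (fun a => 0 < a) u &&
    feval (fun i => nth 0 u i.-1) S' && ~~ feval (fun i => nth 0 u i.-1) (edge_clause I))%N : nat)%:R%R.
  case: (boolP (_ && _ && _ && _)) => E.
  - move: (E) => /andP[/andP[/andP[/eqP su pu] fs] nfc].
    pose w0 := [seq nth 0 u (rho i).-1 | i <- iota 1 p].
    have sw0 : size w0 = p by rewrite size_map size_iota.
    have Uw0 : Uw w0 = u.
      apply: (@eq_from_nth _ 0); first by rewrite sizeU su.
      move=> j; rewrite sizeU => jn.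
      have := nthU w0 j.+1 ltac:(lia); rewrite /= => ->.
      have pr := prange j.+1 ltac:(lia).
      rewrite (nth_map 0); last by rewrite size_iota; lia.
      rewrite nth_iota; last lia.
      rewrite add1n prednK; last lia.
      have [hr hpr] := rhoP _ pr.
      have := CONST nfc (rho (psi m Os j.+1)) j.+1 hr ltac:(lia) hpr.
      by [].
    have G0 : Sgen p (contraction S' m Os) w0 = 1%R.
      rewrite /Sgen sw0 eqxx /=.
      have -> : all (fun a => 0 < a) w0.
        apply/allP => y /mapP [i hi ->]; rewrite mem_iota in hi.
        have [hr _] := rhoP i ltac:(lia).
        apply: (allP pu); apply: mem_nth; rewrite su; lia.
      rewrite /contraction feval_rename.
      have -> : feval ((fun i => nth 0 w0 i.-1) \o psi m Os) S' =
                feval (fun i => nth 0 u i.-1) S'.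
        apply: (@feval_on _ _ _ _ hon) => j hj /=; by rewrite -nthU // Uw0.
      by rewrite fs.
    have w0c : w0 \in candidates u.
      rewrite /candidates; apply/flattenP; exists (all_words (undup u) p).
        apply/mapP; exists p => //; rewrite mem_iota /p; lia.
      rewrite mem_all_words sw0 eqxx /=; apply/allP => y /mapP [i hi ->].
      rewrite mem_iota in hi; have [hr _] := rhoP i ltac:(lia).
      rewrite /= mem_undup; apply: mem_nth; rewrite su; lia.
    rewrite /SUM big_mkcond.
    rewrite (eq_big_seq (fun w => if w == w0 then Sgen p (contraction S' m Os) w else 0%R)).
      rewrite -big_mkcond -big_filter.
      have -> : [seq w <- candidates u | w == w0] = [:: w0]
        by exact: filter_pred1_uniq (uniq_candidates u) w0c.
      by rewrite big_seq1 G0.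
    move=> w wc; case: (eqVneq w w0) => [-> | nw]; rewrite ?eqxx ?(negbTE nw).
      rewrite ifT //; apply/andP; split; first by rewrite /rs size_map sw0 /p; lia.
      by rewrite Hup // Uw0.
    case: ifP => // /andP[_ /eqP uw].
    rewrite /Sgen; case hb: (_ && _ && _) => //.
    exfalso; move/eqP: nw; apply.
    move: hb => /andP[/andP[/eqP sw _] _].
    have e1 : Uw w = u by rewrite -Hup.
    by rewrite (recover _ sw) (recover _ sw0) e1 Uw0.
  - rewrite /SUM big1_seq // => w /andP[/andP[_ /eqP uw] _].
    rewrite /Sgen; case hb: (_ && _ && _) => //.
    exfalso; move/negP: E; apply.
    move: hb => /andP[/andP[/eqP sw pw] fw].
    have Ue : Uw w = u by rewrite -Hup.
    rewrite -Ue sizeU eqxx /=.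
    have hf : forall F, on_elems n F -> feval (fun i => nth 0 (Uw w) i.-1) F =
        feval ((fun i => nth 0 w i.-1) \o psi m Os) F.
      move=> F hF; apply: (@feval_on _ _ _ _ hF) => j hj /=; by rewrite nthU.
    rewrite hf // -feval_rename fw andbT.
    apply/andP; split.
      apply/allP => y /mapP [j hj ->]; rewrite mem_iota in hj.
      have := prange j ltac:(lia) => pj.
      apply: (allP pw); apply: mem_nth; rewrite sw; lia.
    rewrite feval_edge; apply/hasPn => [[a b]] hab /=; rewrite negbK.
    have [aV bV] := @VC_mem _ _ hab.
    have := inV _ aV; have := inV _ bV => hb ha.
    rewrite /= in ha hb; rewrite !nthU ?(psiI _ _ hab) //; lia.
rewrite /Sgen /=.
by case: (_ == n); case: (all _ u); case: (feval _ S'); case: (feval _ (edge_clause I)).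
Qed.
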